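(* Let $\mathbb{F}$ be an infinite field and $d\in\{1,2,3\}$. Then the set $S(d)$ is a minimal (with respect to inclusion) separating set for $R^{GL(2)}$.
   Context: Let $R=R_{2,d}=\mathbb{F}[x_{ij}(k)\mid 1\leq i,j\leq 2,\ 1\leq k\leq d]$ and let $X_k=(x_{ij}(k))$ be the $2\times 2$ generic matrices; $GL(2)$ acts by $g\cdot x_{ij}(k)=(g^{-1}X_kg)_{ij}$ and $R^{GL(2)}$ is the invariant algebra. Elements of $R$ are functions on $H=M(2)^{\oplus d}$ via $x_{ij}(k)(A_1,\dots,A_d)=(A_k)_{ij}$. Points $u,v\in H$ are separated by $S\subseteq R^{GL(2)}$ if $f(u)\neq f(v)$ for some $f\in S$, and separated if separated by $R^{GL(2)}$; $S$ is separating if every separated pair is separated by $S$. Here $S(d)$ consists of $\mathrm{tr}(X_i),\det(X_i)$ for $1\le i\le d$, $\mathrm{tr}(X_iX_j)$ for $1\le i<j\le d$, and $\mathrm{tr}(X_iX_jX_k)$ for $1\le i<j<k\le d$. *)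

(* Defs.v *)
From HB Require Import structures.
From mathcomp Require Import all_boot all_order all_algebra.
Set Implicit Arguments. Unset Strict Implicit. Unset Printing Implicit Defensive.
Import Order.TTheory GRing.Theory Num.Theory.
Local Open Scope ring_scope.

(* H = M(2)^{(+) d}: a point is a d-tuple of 2x2 matrices, indexed by 'I_d
   (index k in the paper corresponds to ordinal k-1). *)
Definition pt (F : fieldType) (d : nat) := 'I_d -> 'M[F]_2.

(* Elements of R = F[x_ij(k)] viewed as functions on H: the polynomial
   functions, i.e. the smallest class containing constants and the coordinate
   functions x_ij(k), closed under + and * (and pointwise equality). *)
Inductive polyfun (F : fieldType) (d : nat) : (pt F d -> F) -> Prop :=
| pf_const (c : F) : polyfun (fun _ => c)
| pf_coord (k : 'I_d) (i j : 'I_2) : polyfun (fun A => A k i j)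
| pf_add f g : polyfun f -> polyfun g -> polyfun (fun A => f A + g A)
| pf_mul f g : polyfun f -> polyfun g -> polyfun (fun A => f A * g A)
| pf_ext f g : polyfun f -> (forall A, f A = g A) -> polyfun g.

Definition conj_pt (F : fieldType) (d : nat) (g : 'M[F]_2) (A : pt F d) : pt F d :=
  fun k => invmx g *m A k *m g.

Definition invariant (F : fieldType) (d : nat) (f : pt F d -> F) : Prop :=
  polyfun f /\ forall g : 'M[F]_2, g \in unitmx -> forall A, f (conj_pt g A) = f A.

Definition separated_by (F : fieldType) (d : nat) (S : (pt F d -> F) -> Prop)
  (u v : pt F d) : Prop := exists f, S f /\ f u <> f v.

Definition separated (F : fieldType) (d : nat) (u v : pt F d) : Prop :=
  separated_by (@invariant F d) u v.

Definition separating (F : fieldType) (d : nat) (S : (pt F d -> F) -> Prop) : Prop :=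
  (forall f, S f -> invariant f) /\
  forall u v, separated u v -> separated_by S u v.

Definition minimal_separating (F : fieldType) (d : nat) (S : (pt F d -> F) -> Prop) : Prop :=
  separating S /\
  forall T : (pt F d -> F) -> Prop, (forall f, T f -> S f) -> separating T ->
    forall f, S f -> T f.

Definition Sd (F : fieldType) (d : nat) (f : pt F d -> F) : Prop :=
  (exists i : 'I_d, f = (fun A => \tr (A i))) \/
  (exists i : 'I_d, f = (fun A => \det (A i))) \/
  (exists i j : 'I_d, (i < j)%N /\ f = (fun A => \tr (A i *m A j))) \/
  (exists i j k : 'I_d, (i < j)%N /\ (j < k)%N /\
       f = (fun A => \tr (A i *m A j *m A k))).

Definition infinite_field (F : fieldType) : Prop :=
  forall s : seq F, exists x : F, x \notin s.

(* Main.v *)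
Require Import Defs.
From HB Require Import structures.
From mathcomp Require Import all_boot all_order all_algebra.
From Stdlib Require Import FunctionalExtensionality Classical.
From mathcomp Require Import ring zify.
Require Import Defs.
Set Implicit Arguments. Unset Strict Implicit. Unset Printing Implicit Defensive.
Import Order.TTheory GRing.Theory Num.Theory.
Local Open Scope ring_scope.


Section Mx2.
Variable R : comNzRingType.
Lemma ord2P (i : 'I_2) : i = 0 \/ i = 1.
Proof. case: i => [[|[|]]] //= H; [left|right]; exact: val_inj. Qed.
Lemma l00 : lift (ord0 : 'I_2) (ord0 : 'I_1) = 1. Proof. exact: val_inj. Qed.
Lemma o0 : (ord0 : 'I_2) = 0. Proof. exact: val_inj. Qed.
Lemma mul2E (A B : 'M[R]_2) i j : (A *m B) i j = A i 0 * B 0 j + A i 1 * B 1 j.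
Proof. by rewrite !mxE !big_ord_recl big_ord0 addr0 l00 o0. Qed.
Lemma det2E (A : 'M[R]_2) : \det A = A 0 0 * A 1 1 - A 0 1 * A 1 0.
Proof.
rewrite (expand_det_row A 0) !big_ord_recl big_ord0 addr0 /cofactor.
rewrite !det_mx11 !mxE /=.
have -> : lift 0 (0 : 'I_1) = 1 :> 'I_2 by exact: val_inj.
have -> : lift (1 : 'I_2) (0 : 'I_1) = 0 :> 'I_2 by exact: val_inj.
by rewrite o0 /= expr0 expr1 !mul1r mulN1r mulrN. Qed.
Lemma tr2E (A : 'M[R]_2) : \tr A = A 0 0 + A 1 1.
Proof. by rewrite /mxtrace !big_ord_recl big_ord0 addr0 l00 o0. Qed.

Definition mk2 (a b c e : R) : 'M[R]_2 :=
  \matrix_(i, j) (if i == 0 then (if j == 0 then a else b) else (if j == 0 then c else e)).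
Lemma mk2E00 a b c e : mk2 a b c e 0 0 = a. Proof. by rewrite mxE. Qed.
Lemma mk2E01 a b c e : mk2 a b c e 0 1 = b. Proof. by rewrite mxE. Qed.
Lemma mk2E10 a b c e : mk2 a b c e 1 0 = c. Proof. by rewrite mxE. Qed.
Lemma mk2E11 a b c e : mk2 a b c e 1 1 = e. Proof. by rewrite mxE. Qed.
Lemma mx2_eq (A B : 'M[R]_2) : A 0 0 = B 0 0 -> A 0 1 = B 0 1 -> A 1 0 = B 1 0 ->
  A 1 1 = B 1 1 -> A = B.
Proof.
move=> h1 h2 h3 h4; apply/matrixP => i j.
by case: (ord2P i) => ->; case: (ord2P j) => ->.
Qed.
Lemma sc2E (a : R) i j : (a%:M : 'M[R]_2) i j = a * (i == j)%:R.
Proof. by rewrite mxE mulr_natr. Qed.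
Lemma sc00 (a : R) : (a%:M : 'M[R]_2) 0 0 = a. Proof. by rewrite mxE eqxx mulr1n. Qed.
Lemma sc11 (a : R) : (a%:M : 'M[R]_2) 1 1 = a. Proof. by rewrite mxE eqxx mulr1n. Qed.
Lemma sc01 (a : R) : (a%:M : 'M[R]_2) 0 1 = 0. Proof. by rewrite mxE. Qed.
Lemma sc10 (a : R) : (a%:M : 'M[R]_2) 1 0 = 0. Proof. by rewrite mxE. Qed.
Lemma eq01 : ((0 : 'I_2) == 1) = false. Proof. by []. Qed.
Lemma eq10 : ((1 : 'I_2) == 0) = false. Proof. by []. Qed.
End Mx2.

Definition mxE2 := (mk2E00, mk2E01, mk2E10, mk2E11, mul2E, tr2E, det2E, sc00, sc11, sc01, sc10, sc2E, eq01, eq10, eqxx).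


Section Gen.
Variable F : fieldType.
Variable d : nat.
Hypothesis hF : infinite_field F.
Notation pt := (pt F d).

Lemma pf_opp (f : pt -> F) : polyfun f -> polyfun (fun A => - f A).
Proof. move=> h; apply: (pf_ext (pf_mul (pf_const _ (-1)) h)) => A; by rewrite mulN1r. Qed.
Lemma pf_sub (f g : pt -> F) : polyfun f -> polyfun g -> polyfun (fun A => f A - g A).
Proof. by move=> hf hg; apply: pf_add => //; apply: pf_opp. Qed.

Lemma pf_path (f : pt -> F) (P : F -> pt) : polyfun f ->
  (forall k i j, exists p : {poly F}, forall s, P s k i j = p.[s]) ->
  exists q : {poly F}, forall s, f (P s) = q.[s].
Proof.
move=> hf hP; elim: hf.
- by move=> c; exists c%:P => s; rewrite hornerC.
- by move=> k i j; exact: hP.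
- move=> f1 g1 _ [p1 h1] _ [p2 h2]; exists (p1 + p2) => s; by rewrite hornerD h1 h2.
- move=> f1 g1 _ [p1 h1] _ [p2 h2]; exists (p1 * p2) => s; by rewrite hornerM h1 h2.
- move=> f1 g1 _ [p1 h1] he; exists p1 => s; by rewrite -he h1.
Qed.

Lemma seq_inf n : exists s : seq F, [/\ uniq s, size s = n & 0 \notin s].
Proof.
elim: n => [|n [s [us ss ns]]]; first by exists [::].
have [x hx] := hF (0 :: s).
exists (x :: s); split => //=.
- rewrite us andbT; apply/negP => xs; move: hx; by rewrite inE xs orbT.
- by rewrite ss.
- rewrite inE negb_or ns andbT; apply/negP => /eqP x0; move: hx; by rewrite inE -x0 eqxx.
Qed.

Lemma poly_const0 (q : {poly F}) c : (forall s, s != 0 -> q.[s] = c) -> q.[0] = c.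
Proof.
move=> h; have [/eqP e|ne] := boolP (q - c%:P == 0).
  by move/eqP: e; rewrite subr_eq0 => /eqP ->; rewrite hornerC.
have [s [us ss ns]] := seq_inf (size (q - c%:P)).
have: all (root (q - c%:P)) s.
  apply/allP => x xs; rewrite /root hornerD hornerN hornerC h ?subrr //.
  by apply/negP => /eqP x0; move: ns; rewrite -x0 xs.
move/(max_poly_roots ne)/(_ us); by rewrite ss ltnn.
Qed.

Definition eqv (u v : pt) := forall f, invariant f -> f u = f v.
Lemma eqv_refl u : eqv u u. Proof. by []. Qed.
Lemma eqv_sym u v : eqv u v -> eqv v u. Proof. by move=> h f hf; rewrite (h f hf). Qed.
Lemma eqv_trans u v w : eqv u v -> eqv v w -> eqv u w.
Proof. by move=> h1 h2 f hf; rewrite (h1 f hf) (h2 f hf). Qed.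

Lemma unit2 (g : 'M[F]_2) : \det g != 0 -> g \in unitmx.
Proof. by rewrite unitmxE unitfE. Qed.

Lemma conj_spec (g : 'M[F]_2) (u v : pt) : g \in unitmx ->
  (forall k, u k *m g = g *m v k) -> conj_pt g u = v.
Proof.
move=> hg h; apply: functional_extensionality => k; rewrite /conj_pt -mulmxA h mulmxA mulVmx //.
by rewrite mul1mx.
Qed.

Lemma eqv_conj (g : 'M[F]_2) (u v : pt) : g \in unitmx ->
  (forall k, u k *m g = g *m v k) -> eqv u v.
Proof.
move=> hg h f [_ hf]; rewrite -(conj_spec hg h); by rewrite hf.
Qed.

Lemma closure (P : F -> pt) w :
  (forall k i j, exists p : {poly F}, forall s, P s k i j = p.[s]) ->
  (forall s, s != 0 -> eqv (P s) w) -> eqv (P 0) w.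
Proof.
move=> hP h f hf; have [q hq] := pf_path hf.1 hP.
rewrite hq; apply: poly_const0 => s s0; by rewrite -hq (h s s0 f hf).
Qed.

Definition dp (u : pt) : pt := fun k => mk2 (u k 0 0) 0 0 (u k 1 1).

Lemma entries_poly (P : F -> pt) (a b c e : 'I_d -> {poly F}) :
  (forall s k, P s k = mk2 (a k).[s] (b k).[s] (c k).[s] (e k).[s]) ->
  forall k i j, exists p : {poly F}, forall s, P s k i j = p.[s].
Proof.
move=> h k i j; case: (ord2P i) => ->; case: (ord2P j) => ->.
- by exists (a k) => s; rewrite h !mxE2.
- by exists (b k) => s; rewrite h !mxE2.
- by exists (c k) => s; rewrite h !mxE2.
- by exists (e k) => s; rewrite h !mxE2.
Qed.

Lemma upper_equiv (u : pt) : (forall k, u k 1 0 = 0) -> eqv u (dp u).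
Proof.
move=> hu.
pose P (s : F) : pt := fun k => mk2 (u k 0 0) (s * u k 0 1) 0 (u k 1 1).
have hP : forall k i j, exists p : {poly F}, forall s, P s k i j = p.[s].
  apply: (entries_poly (a := fun k => (u k 0 0)%:P) (b := fun k => 'X * (u k 0 1)%:P)
     (c := fun k => 0) (e := fun k => (u k 1 1)%:P)) => s k.
  by rewrite /P !hornerE.
have h0 : P 0 = dp u by apply: functional_extensionality => k; rewrite /P /dp mul0r.
rewrite -h0; apply: eqv_sym; apply: closure => // s s0.
apply: eqv_sym; apply: (@eqv_conj (mk2 1 0 0 s)).
  by apply: unit2; rewrite !mxE2 mul1r mul0r subr0.
move=> k; apply: mx2_eq; rewrite /P !mxE2 ?hu; ring.
Qed.

Lemma lower_equiv (u : pt) : (forall k, u k 0 1 = 0) -> eqv u (dp u).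
Proof.
move=> hu.
pose P (s : F) : pt := fun k => mk2 (u k 0 0) 0 (s * u k 1 0) (u k 1 1).
have hP : forall k i j, exists p : {poly F}, forall s, P s k i j = p.[s].
  apply: (entries_poly (a := fun k => (u k 0 0)%:P) (c := fun k => 'X * (u k 1 0)%:P)
     (b := fun k => 0) (e := fun k => (u k 1 1)%:P)) => s k.
  by rewrite /P !hornerE.
have h0 : P 0 = dp u by apply: functional_extensionality => k; rewrite /P /dp mul0r.
rewrite -h0; apply: eqv_sym; apply: closure => // s s0.
apply: eqv_sym; apply: (@eqv_conj (mk2 s 0 0 1)).
  by apply: unit2; rewrite !mxE2 mulr1 mul0r subr0.
move=> k; apply: mx2_eq; rewrite /P !mxE2 ?hu; ring.
Qed.

End Gen.


Section Ids.
Variable R : comNzRingType.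
Lemma I2 (A B : 'M[R]_2) : \tr (A *m A *m B) = \tr A * \tr (A *m B) - \det A * \tr B.
Proof. rewrite !mxE2. ring. Qed.
Lemma I3 (A B C : 'M[R]_2) : \tr (A *m B *m C) + \tr (A *m C *m B) =
  \tr A * \tr (B *m C) + \tr B * \tr (A *m C) + \tr C * \tr (A *m B) - \tr A * \tr B * \tr C.
Proof. rewrite !mxE2. ring. Qed.
Lemma I4 (A : 'M[R]_2) : \tr (A *m A) = \tr A ^+ 2 - 2%:R * \det A.
Proof. rewrite !mxE2. ring. Qed.
Lemma Idet (A B : 'M[R]_2) : \det (A + B) = \det A + \det B + \tr A * \tr B - \tr (A *m B).
Proof. rewrite !mxE2 !mxE. ring. Qed.
End Ids.

Section Comb.
Variable F : fieldType.
Variable d : nat.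
Notation pt := (pt F d).
Notation O := (option 'I_d).

Definition w (u : pt) (o : O) : 'M[F]_2 := if o is Some k then u k else 1%:M.
Definition Ls (s : seq O) (c : O -> F) (u : pt) : 'M[F]_2 := \sum_(o <- s) c o *: w u o.

Lemma tr3_exp s1 s2 s3 c1 c2 c3 u : \tr (Ls s1 c1 u *m Ls s2 c2 u *m Ls s3 c3 u) =
  \sum_(a <- s1) \sum_(b <- s2) \sum_(e <- s3) c1 a * c2 b * c3 e * \tr (w u a *m w u b *m w u e).
Proof.
rewrite /Ls mulmx_suml mulmx_suml raddf_sum /=; apply: eq_bigr => a _.
rewrite (mulmx_sumr (c1 a *: w u a)) mulmx_suml raddf_sum /=; apply: eq_bigr => b _.
rewrite mulmx_sumr raddf_sum /=; apply: eq_bigr => e _.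
rewrite -!scalemxAl -!scalemxAr -!scalemxAl !mxtraceZ. ring.
Qed.

Definition Wsame (u v : pt) :=
  (forall a b e, \tr (w u a *m w u b *m w u e) = \tr (w v a *m w v b *m w v e)) /\
  (forall a, \det (w u a) = \det (w v a)).

Lemma Ls_tr3 u v s1 s2 s3 c1 c2 c3 : Wsame u v ->
  \tr (Ls s1 c1 u *m Ls s2 c2 u *m Ls s3 c3 u) = \tr (Ls s1 c1 v *m Ls s2 c2 v *m Ls s3 c3 v).
Proof.
move=> [h _]; rewrite !tr3_exp; apply: eq_bigr => a _; apply: eq_bigr => b _;
apply: eq_bigr => e _; by rewrite h.
Qed.

Definition onec : O -> F := fun _ => 1.
Lemma Ls_one u : Ls [:: None] onec u = 1%:M.
Proof. by rewrite /Ls big_cons big_nil addr0 scale1r. Qed.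

Lemma Ls_tr1 u v s c : Wsame u v -> \tr (Ls s c u) = \tr (Ls s c v).
Proof.
move=> h; have := Ls_tr3 s [:: None] [:: None] c onec onec h.
by rewrite !Ls_one !mulmx1.
Qed.
Lemma Ls_tr2 u v s1 s2 c1 c2 : Wsame u v ->
  \tr (Ls s1 c1 u *m Ls s2 c2 u) = \tr (Ls s1 c1 v *m Ls s2 c2 v).
Proof.
move=> h; have := Ls_tr3 s1 s2 [:: None] c1 c2 onec h.
by rewrite !Ls_one !mulmx1.
Qed.

Lemma Ls_cons a s c u : Ls (a :: s) c u = c a *: w u a + Ls s c u.
Proof. by rewrite /Ls big_cons. Qed.
Lemma Ls_seq1 a c u : Ls [:: a] c u = c a *: w u a.
Proof. by rewrite /Ls big_seq1. Qed.

Lemma Ls_det u v s c : Wsame u v -> \det (Ls s c u) = \det (Ls s c v).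
Proof.
move=> h; elim: s => [|a s IH]; first by rewrite /Ls !big_nil.
rewrite !Ls_cons !Idet IH -!Ls_seq1 (Ls_tr1 _ _ h) (Ls_tr1 s c h) (Ls_tr2 _ _ _ _ h).
by rewrite !Ls_seq1 !detZ h.2.
Qed.

Definition cj (g X : 'M[F]_2) := invmx g *m X *m g.
Lemma cjM g X Y : g \in unitmx -> cj g X *m cj g Y = cj g (X *m Y).
Proof.
move=> hg; by rewrite /cj !mulmxA (mulmxK hg).
Qed.
Lemma cj_tr g X : g \in unitmx -> \tr (cj g X) = \tr X.
Proof. by move=> hg; rewrite /cj mxtrace_mulC mulmxA mulmxV // mul1mx. Qed.
Lemma cj_det g X : g \in unitmx -> \det (cj g X) = \det X.
Proof.
move=> hg; rewrite /cj !det_mulmx mulrC mulrA -det_mulmx mulmxV // det1 mul1r.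
by [].
Qed.
Lemma w_conj g u o : g \in unitmx -> w (conj_pt g u) o = cj g (w u o).
Proof. by move=> hg; case: o => [k|] //=; rewrite /cj mulmx1 mulVmx. Qed.
Lemma Ls_conj g u s c : g \in unitmx -> Ls s c (conj_pt g u) = cj g (Ls s c u).
Proof.
move=> hg; rewrite /Ls /cj mulmx_sumr mulmx_suml; apply: eq_bigr => o _.
rewrite w_conj // /cj; by rewrite -scalemxAr -scalemxAl.
Qed.

Lemma Wsame_conjl g u v : g \in unitmx -> Wsame u v -> Wsame (conj_pt g u) v.
Proof.
move=> hg [h1 h2]; split.
  by move=> a b e; rewrite !w_conj // !cjM // cj_tr.
by move=> a; rewrite w_conj // cj_det.
Qed.
Lemma Wsame_sym u v : Wsame u v -> Wsame v u.
Proof. by move=> [h1 h2]; split => *; rewrite ?h1 ?h2. Qed.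
Lemma Wsame_conj g h u v : g \in unitmx -> h \in unitmx -> Wsame u v ->
  Wsame (conj_pt g u) (conj_pt h v).
Proof.
move=> hg hh s; apply: Wsame_conjl => //; apply: Wsame_sym; apply: Wsame_conjl => //.
exact: Wsame_sym.
Qed.

End Comb.
Arguments onec {F d}.


Section Data.
Variable F : fieldType.
Variable d : nat.
Notation pt := (pt F d).

Definition Seq (u v : pt) := forall f, Sd f -> f u = f v.

Variables u v : pt.
Hypothesis hS : Seq u v.

Lemma s_tr (i : 'I_d) : \tr (u i) = \tr (v i).
Proof. exact: (hS (f := fun A => \tr (A i))) (or_introl (ex_intro _ i erefl)). Qed.
Lemma s_det (i : 'I_d) : \det (u i) = \det (v i).
Proof.
exact: (hS (f := fun A => \det (A i))) (or_intror (or_introl (ex_intro _ i erefl))).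
Qed.
Lemma s_tr2 (i j : 'I_d) : (i < j)%N -> \tr (u i *m u j) = \tr (v i *m v j).
Proof.
move=> ij; apply: (hS (f := fun A => \tr (A i *m A j))); right; right; left.
by exists i, j.
Qed.
Lemma s_tr3 (i j k : 'I_d) : (i < j)%N -> (j < k)%N ->
  \tr (u i *m u j *m u k) = \tr (v i *m v j *m v k).
Proof.
move=> ij jk; apply: (hS (f := fun A => \tr (A i *m A j *m A k))); right; right; right.
by exists i, j, k.
Qed.

Lemma s_tr2a (i j : 'I_d) : \tr (u i *m u j) = \tr (v i *m v j).
Proof.
case: (ltngtP i j) => h; first exact: s_tr2.
  by rewrite mxtrace_mulC [in RHS]mxtrace_mulC s_tr2.
have -> : i = j by exact: val_inj.
by rewrite !I4 s_tr s_det.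
Qed.

Definition P3 (i j k : 'I_d) := \tr (u i *m u j *m u k) = \tr (v i *m v j *m v k).
Lemma cyc (A B C : 'M[F]_2) : \tr (A *m B *m C) = \tr (B *m C *m A).
Proof. by rewrite -mulmxA mxtrace_mulC. Qed.
Lemma Pcyc i j k : P3 i j k -> P3 j k i.
Proof. by rewrite /P3 (cyc (u i)) (cyc (v i)). Qed.
Lemma Psorted (a b c : 'I_d) : (a < b)%N -> (b < c)%N -> P3 a b c /\ P3 a c b.
Proof.
move=> ab bc; have h := s_tr3 ab bc; split => //.
rewrite /P3; apply: (addrI (\tr (u a *m u b *m u c))).
by rewrite [in LHS]addrC I3 [in RHS]h [in RHS]addrC I3 !s_tr !s_tr2a.
Qed.

Lemma s_tr3a i j k : P3 i j k.
Proof.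
have [ij|nij] := eqVneq i j.
  by rewrite /P3 ij !I2 !s_tr !s_det !s_tr2a.
have [jk|njk] := eqVneq j k.
  rewrite /P3 -jk (cyc (u i)) (cyc (v i)) !I2.
  by rewrite !s_tr !s_det !s_tr2a.
have [ik|nik] := eqVneq i k.
  rewrite /P3 -ik (cyc (u i)) (cyc (u j)) (cyc (v i)) (cyc (v j)) !I2.
  by rewrite !s_tr !s_det !s_tr2a.
have ne (a b : 'I_d) : a != b -> (a < b)%N \/ (b < a)%N.
  move=> nab; case: (ltngtP a b) => h; [by left|by right|].
  by move: nab; rewrite (val_inj h) eqxx.
case: (ne _ _ nij) => hij; case: (ne _ _ njk) => hjk; case: (ne _ _ nik) => hik.
- exact: (Psorted hij hjk).1.
- by move: (ltn_trans hij hjk); rewrite ltnNge ltnW.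
- exact: (Psorted hik hjk).2.
- apply: Pcyc; exact: (Psorted hik hij).1.
- apply: Pcyc; apply: Pcyc; exact: (Psorted hij hik).2.
- apply: Pcyc; apply: Pcyc; exact: (Psorted hjk hik).1.
- by move: (ltn_trans hjk hij); rewrite ltnNge ltnW.
- apply: Pcyc; exact: (Psorted hjk hij).2.
Qed.

Lemma Wsame_of_Seq : Wsame u v.
Proof.
split.
  case=> [a|]; case=> [b|]; case=> [e|] /=; rewrite ?mul1mx ?mulmx1 //.
  - exact: s_tr3a.
  - exact: s_tr2a.
  - exact: s_tr2a.
  - exact: s_tr.
  - exact: s_tr2a.
  - exact: s_tr.
  - exact: s_tr.
by case=> [a|] //=; rewrite s_det.
Qed.
End Data.


Ltac fld := field; repeat (apply/andP; split); done.
Ltac transfer H := refine (etrans _ (etrans H _)); [rewrite !mxE2; ring | rewrite !mxE2; ring].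

Section C1.
Variable F : fieldType.
Variable d : nat.
Notation pt := (pt F d).

Lemma two_eq (l m X Y X' Y' : F) : l != m -> X + Y = X' + Y' ->
  l * X + m * Y = l * X' + m * Y' -> X = X'.
Proof.
move=> hlm e1 e2; apply/eqP; rewrite -subr_eq0.
have : (l - m) * (X - X') = 0.
  have -> : (l - m) * (X - X') = (l * X + m * Y) - (l * X' + m * Y') - m * ((X + Y) - (X' + Y')) by ring.
  by rewrite e1 e2 !subrr mulr0 subr0.
by move/eqP; rewrite mulf_eq0 !subr_eq0 (negbTE hlm).
Qed.

Lemma eig (X : 'M[F]_2) l m : l != m -> \tr X = l + m -> \det X = l * m ->
  exists g, g \in unitmx /\ X *m g = g *m mk2 l 0 0 m.
Proof.
move=> hlm; rewrite tr2E det2E => ht hd.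
have he : X 1 1 = l + m - X 0 0 by rewrite -ht; ring.
have [hc|hc] := eqVneq (X 1 0) 0.
  have : (X 0 0 - l) * (X 0 0 - m) = 0.
    have -> : (X 0 0 - l) * (X 0 0 - m) = X 0 0 * (X 0 0 + X 1 1) - X 0 0 * X 1 1 - X 0 0 * (l + m) + l * m
      by ring.
    by rewrite ht -hd hc mulr0 subr0; ring.
  move/eqP; rewrite mulf_eq0 !subr_eq0 => /orP [] /eqP ha.
    exists (mk2 1 (X 0 1) 0 (m - l)); split.
      by apply: unit2; rewrite !mxE2 ?mul1r ?mulr1 ?mul0r ?mulr0 ?subr0 ?sub0r ?oppr_eq0 ?subr_eq0 eq_sym.
    by apply: mx2_eq; rewrite !mxE2 ?hc ?he ?ha; ring.
  exists (mk2 (X 0 1) 1 (l - m) 0); split.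
    by apply: unit2; rewrite !mxE2 ?mul1r ?mulr1 ?mul0r ?mulr0 ?subr0 ?sub0r ?oppr_eq0 ?subr_eq0.
  by apply: mx2_eq; rewrite !mxE2 ?hc ?he ?ha; ring.
have hb : X 0 1 = (X 0 0 * X 1 1 - l * m) / X 1 0 by rewrite -hd; fld.
exists (mk2 (l - X 1 1) (m - X 1 1) (X 1 0) (X 1 0)); split.
  apply: unit2; rewrite !mxE2.
  have -> : (l - X 1 1) * X 1 0 - (m - X 1 1) * X 1 0 = X 1 0 * (l - m) by ring.
  by rewrite mulf_neq0 // subr_eq0.
by apply: mx2_eq; rewrite !mxE2 ?hb ?he; fld.
Qed.

End C1.

Section Torus.
Variable F : fieldType.
Variable d : nat.
Hypothesis hF : infinite_field F.
Notation pt := (pt F d).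

Lemma Lsk k (u : pt) : Ls [:: Some k] onec u = u k.
Proof. by rewrite Ls_seq1 /onec scale1r. Qed.

Lemma torus (u v : pt) s c l m : l != m -> Wsame u v -> Ls s c u = mk2 l 0 0 m ->
  Ls s c v = mk2 l 0 0 m -> eqv u v.
Proof.
move=> hlm hW hu hv.
have Etr k : u k 0 0 + u k 1 1 = v k 0 0 + v k 1 1.
  by have := Ls_tr1 [:: Some k] onec hW; rewrite !Lsk !tr2E.
have EtrD k : l * u k 0 0 + m * u k 1 1 = l * v k 0 0 + m * v k 1 1.
  have := Ls_tr2 s [:: Some k] c onec hW; rewrite hu hv !Lsk => H; transfer H.
have hp k : u k 0 0 = v k 0 0 by apply: (two_eq hlm (Etr k) (EtrD k)).
have hq k : u k 1 1 = v k 1 1 by have := Etr k; rewrite hp => /addrI.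
have Etr2 k j : (u k 0 0 * u j 0 0 + u k 0 1 * u j 1 0) + (u k 1 0 * u j 0 1 + u k 1 1 * u j 1 1)
   = (v k 0 0 * v j 0 0 + v k 0 1 * v j 1 0) + (v k 1 0 * v j 0 1 + v k 1 1 * v j 1 1).
  have := Ls_tr2 [:: Some k] [:: Some j] onec onec hW; rewrite !Lsk => H; transfer H.
have Etr2D k j : l * (u k 0 0 * u j 0 0 + u k 0 1 * u j 1 0) + m * (u k 1 0 * u j 0 1 + u k 1 1 * u j 1 1)
   = l * (v k 0 0 * v j 0 0 + v k 0 1 * v j 1 0) + m * (v k 1 0 * v j 0 1 + v k 1 1 * v j 1 1).
  have := Ls_tr3 s [:: Some k] [:: Some j] c onec onec hW; rewrite hu hv !Lsk => H; transfer H.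
have hxy k j : u k 0 1 * u j 1 0 = v k 0 1 * v j 1 0.
  by have := two_eq hlm (Etr2 k j) (Etr2D k j); rewrite !hp => /addrI.
have [/existsP [k /existsP [j hkj]] | hall] :=
  boolP [exists k, exists j, u k 0 1 * u j 1 0 != 0].
  have hxk : u k 0 1 != 0 by move: hkj; rewrite mulf_eq0 negb_or => /andP [].
  have hyj : u j 1 0 != 0 by move: hkj; rewrite mulf_eq0 negb_or => /andP [].
  have hkj' : v k 0 1 * v j 1 0 != 0 by rewrite -hxy.
  have hxk' : v k 0 1 != 0 by move: hkj'; rewrite mulf_eq0 negb_or => /andP [].
  have hyj' : v j 1 0 != 0 by move: hkj'; rewrite mulf_eq0 negb_or => /andP [].
  apply: (@eqv_conj _ _ (mk2 1 0 0 (v k 0 1 / u k 0 1))).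
    by apply: unit2; rewrite !mxE2 mul1r mulr0 subr0 mulf_neq0 // invr_eq0.
  move=> n; apply: mx2_eq; rewrite !mxE2 ?hp ?hq.
  - ring.
  - have e1 := hxy n j; have e2 := hxy k j.
    have -> : v k 0 1 = u k 0 1 * u j 1 0 / v j 1 0 by rewrite e2 mulfK.
    have -> : v n 0 1 = u n 0 1 * u j 1 0 / v j 1 0 by rewrite e1 mulfK.
    fld.
  - have e1 := hxy k n.
    have -> : u n 1 0 = v k 0 1 * v n 1 0 / u k 0 1 by rewrite -e1 [_ * u n 1 0]mulrC mulfK.
    fld.
  - ring.
have h0 : forall k j, u k 0 1 * u j 1 0 = 0.
  move=> k j; apply/eqP; apply: contraNT hall => h; apply/existsP; exists k.
  by apply/existsP; exists j.
have hdp : dp u = dp v.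
  by apply: functional_extensionality => k; rewrite /dp hp hq.
have tri (w : pt) : (forall k j, w k 0 1 * w j 1 0 = 0) -> eqv w (dp w).
  move=> hw; have [/existsP [k hk]|hk] := boolP [exists k, w k 0 1 != 0].
    apply: upper_equiv => // j; by move/eqP: (hw k j); rewrite mulf_eq0 (negbTE hk) => /eqP.
  apply: lower_equiv => // j; apply/eqP; apply: contraNT hk => h.
  by apply/existsP; exists j.
apply: eqv_trans (tri u h0) _; rewrite hdp; apply: eqv_sym; apply: tri.
by move=> k j; rewrite -hxy.
Qed.
End Torus.

Section Cases12.
Variable F : fieldType.
Variable d : nat.
Hypothesis hF : infinite_field F.
Notation pt := (pt F d).

Definition SRS (X : 'M[F]_2) := exists l m, [/\ l != m, \tr X = l + m & \det X = l * m].
Definition nilpm (X : 'M[F]_2) := \tr X = 0 /\ \det X = 0.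

Lemma eqv_conjpt (g : 'M[F]_2) (u : pt) : g \in unitmx -> eqv u (conj_pt g u).
Proof. by move=> hg f [_ hf]; rewrite hf. Qed.

Lemma cj_of (g X D : 'M[F]_2) : g \in unitmx -> X *m g = g *m D -> cj g X = D.
Proof. by move=> hg h; rewrite /cj -mulmxA h mulmxA mulVmx // mul1mx. Qed.

Lemma caseP1 (u v : pt) s c : Wsame u v -> SRS (Ls s c u) -> eqv u v.
Proof.
move=> hW [l [m [hlm ht hd]]].
have [gu [hgu egu]] := eig hlm ht hd.
have [gv [hgv egv]] := eig hlm (etrans (esym (Ls_tr1 s c hW)) ht) (etrans (esym (Ls_det s c hW)) hd).
apply: eqv_trans (eqv_conjpt u hgu) _; apply: eqv_sym; apply: eqv_trans (eqv_conjpt v hgv) _.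
apply: eqv_sym; apply: (torus (s:=s) (c:=c) hF hlm).
- exact: Wsame_conj.
- by rewrite Ls_conj // (cj_of hgu egu).
- by rewrite Ls_conj // (cj_of hgv egv).
Qed.

Lemma nil_conj (N : 'M[F]_2) : nilpm N -> N != 0 ->
  exists g, g \in unitmx /\ N *m g = g *m mk2 0 1 0 0.
Proof.
rewrite /nilpm tr2E det2E => [[ht hd]] hN.
have he : N 1 1 = - N 0 0 by apply: (addrI (N 0 0)); rewrite ht subrr.
have [hc|hc] := eqVneq (N 1 0) 0.
  have ha : N 0 0 = 0.
    have : N 0 0 * N 0 0 = 0.
      have -> : N 0 0 * N 0 0 = - (N 0 0 * N 1 1 - N 0 1 * N 1 0) by rewrite he hc; ring.
      by rewrite hd oppr0.
    by move/eqP; rewrite mulf_eq0 orbb => /eqP.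
  have hb : N 0 1 != 0.
    apply: contraNneq hN => hb; apply/eqP; apply: mx2_eq; by rewrite ?mxE ?hb ?hc ?he ?ha ?oppr0.
  exists (mk2 (N 0 1) 0 0 1); split.
    by apply: unit2; rewrite !mxE2 ?mul1r ?mulr1 ?mul0r ?mulr0 ?subr0.
  by apply: mx2_eq; rewrite !mxE2 ?he ?ha ?hc; ring.
have hb : N 0 1 = N 0 0 * N 1 1 / N 1 0.
  have h : N 0 1 * N 1 0 = N 0 0 * N 1 1 by apply/eqP; rewrite eq_sym -subr_eq0 hd.
  by rewrite -h mulfK.
exists (mk2 (N 0 0) 1 (N 1 0) 0); split.
  by apply: unit2; rewrite !mxE2 ?mul1r ?mulr1 ?mul0r ?mulr0 ?sub0r ?oppr_eq0.
by apply: mx2_eq; rewrite !mxE2 ?hb ?he; fld.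
Qed.

Lemma pivot (u v : pt) s c l : Wsame u v -> Ls s c u = mk2 0 1 0 0 -> Ls s c v = mk2 0 1 0 0 ->
  u l 1 0 != 0 -> eqv u v.
Proof.
move=> hW hu hv hcl.
have hc k : u k 1 0 = v k 1 0.
  have := Ls_tr2 s [:: Some k] c onec hW; rewrite hu hv !Lsk => H; transfer H.
have Etr k : u k 0 0 = v k 0 0 + v k 1 1 - u k 1 1.
  have := Ls_tr1 [:: Some k] onec hW; rewrite !Lsk !tr2E => H; rewrite -H; ring.
have Edet k : u k 0 0 * u k 1 1 - u k 0 1 * u k 1 0 = v k 0 0 * v k 1 1 - v k 0 1 * v k 1 0.
  by have := Ls_det [:: Some k] onec hW; rewrite !Lsk !det2E.
have Etr2 k j : u k 0 0 * u j 0 0 + u k 0 1 * u j 1 0 + (u k 1 0 * u j 0 1 + u k 1 1 * u j 1 1)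
   = v k 0 0 * v j 0 0 + v k 0 1 * v j 1 0 + (v k 1 0 * v j 0 1 + v k 1 1 * v j 1 1).
  by have := Ls_tr2 [:: Some k] [:: Some j] onec onec hW; rewrite !Lsk !tr2E !mul2E.
have E3 k j : u k 1 0 * u j 0 0 + u k 1 1 * u j 1 0 = v k 1 0 * v j 0 0 + v k 1 1 * v j 1 0.
  have := Ls_tr3 s [:: Some k] [:: Some j] c onec onec hW; rewrite hu hv !Lsk => H; transfer H.
have he' n : v n 1 1 = (u n 1 0 * u l 0 0 + u n 1 1 * u l 1 0 - u n 1 0 * v l 0 0) / u l 1 0.
  apply: (mulIf hcl); rewrite mulfVK // (E3 n l) -!hc; ring.
have ha' n : v n 0 0 = u n 0 0 + u n 1 1 - v n 1 1 by rewrite (Etr n); ring.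
have hb'l : v l 0 1 = (v l 0 0 * v l 1 1 - u l 0 0 * u l 1 1 + u l 0 1 * u l 1 0) / u l 1 0.
  apply: (mulIf hcl); rewrite mulfVK //; have := Edet l; rewrite -(hc l) => H.
  apply/eqP; rewrite -subr_eq0; apply/eqP.
  have -> : v l 0 1 * u l 1 0 - (v l 0 0 * v l 1 1 - u l 0 0 * u l 1 1 + u l 0 1 * u l 1 0) =
     (u l 0 0 * u l 1 1 - u l 0 1 * u l 1 0) - (v l 0 0 * v l 1 1 - v l 0 1 * u l 1 0) by ring.
  by rewrite H subrr.
have hb' n : v n 0 1 = (u n 0 0 * u l 0 0 + u n 0 1 * u l 1 0 + u n 1 0 * u l 0 1
     + u n 1 1 * u l 1 1 - v n 0 0 * v l 0 0 - u n 1 0 * v l 0 1 - v n 1 1 * v l 1 1) / u l 1 0.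
  apply: (mulIf hcl); rewrite mulfVK //; have := Etr2 n l; rewrite -!hc => H.
  apply/eqP; rewrite -subr_eq0; apply/eqP.
  have -> : v n 0 1 * u l 1 0 - (u n 0 0 * u l 0 0 + u n 0 1 * u l 1 0 + u n 1 0 * u l 0 1
     + u n 1 1 * u l 1 1 - v n 0 0 * v l 0 0 - u n 1 0 * v l 0 1 - v n 1 1 * v l 1 1) =
     (v n 0 0 * v l 0 0 + v n 0 1 * u l 1 0 + (u n 1 0 * v l 0 1 + v n 1 1 * v l 1 1)) -
     (u n 0 0 * u l 0 0 + u n 0 1 * u l 1 0 + (u n 1 0 * u l 0 1 + u n 1 1 * u l 1 1)) by ring.
  by rewrite H subrr.
apply: (@eqv_conj _ _ (mk2 1 ((v l 1 1 - u l 1 1) / u l 1 0) 0 1)).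
  by apply: unit2; rewrite !mxE2 ?mul1r ?mulr1 ?mul0r ?mulr0 ?subr0 oner_eq0.
move=> n; apply: mx2_eq; rewrite !mxE2 ?(hb' n) ?hb'l ?(ha' n) ?(he' n) ?(ha' l) -?(hc n); fld.
Qed.

Lemma caseP2 (u v : pt) s c l : Wsame u v -> nilpm (Ls s c u) ->
  \tr (Ls s c u *m u l) != 0 -> eqv u v.
Proof.
move=> hW [ht hd] hl.
have hN : Ls s c u != 0 by apply: contraNneq hl => ->; rewrite mul0mx mxtrace0.
have hl' : \tr (Ls s c v *m v l) != 0.
  by have := Ls_tr2 s [:: Some l] c onec hW; rewrite !Lsk => <-.
have hN' : Ls s c v != 0 by apply: contraNneq hl' => ->; rewrite mul0mx mxtrace0.
have [gu [hgu egu]] := nil_conj (conj ht hd) hN.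
have [gv [hgv egv]] := nil_conj (conj (etrans (esym (Ls_tr1 s c hW)) ht)
   (etrans (esym (Ls_det s c hW)) hd)) hN'.
apply: eqv_trans (eqv_conjpt u hgu) _; apply: eqv_sym; apply: eqv_trans (eqv_conjpt v hgv) _.
apply: eqv_sym; apply: (pivot (s:=s) (c:=c) (l:=l)).
- exact: Wsame_conj.
- by rewrite Ls_conj // (cj_of hgu egu).
- by rewrite Ls_conj // (cj_of hgv egv).
- have : \tr (cj gu (Ls s c u) *m cj gu (u l)) = conj_pt gu u l 1 0.
    by rewrite (cj_of hgu egu) /conj_pt !mxE2; ring.
  by move=> <-; rewrite cjM // cj_tr.
Qed.
End Cases12.


Section Span.
Variable F : fieldType.

Definition nsc (X : 'M[F]_2) := X 0 1 != 0 \/ X 1 0 != 0 \/ X 0 0 != X 1 1.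

Lemma nsc_scal (X : 'M[F]_2) a : nsc X -> X <> a%:M.
Proof.
move=> h e; move: h; rewrite /nsc e !mxE2.
by case=> [|[]]; rewrite ?eqxx.
Qed.

Lemma solveY (a b c : F) (X Y : 'M[F]_2) : c != 0 ->
  a%:M + b *: X + c *: Y = 0 -> Y = (- a / c)%:M + (- b / c) *: X.
Proof.
move=> hc H; apply/matrixP => i j; have := congr1 (fun M : 'M[F]_2 => M i j) H; rewrite !mxE => h.
apply: (mulfI hc); move: h; case: (i == j) => /=; rewrite ?mulr1n ?mulr0n => h.
  apply/eqP; rewrite -subr_eq0; apply/eqP; rewrite -h; fld.
rewrite !add0r in h *; apply/eqP; rewrite -subr_eq0; apply/eqP; rewrite -h; fld.
Qed.

Lemma solveX (a b : F) (X : 'M[F]_2) : b != 0 -> a%:M + b *: X = 0 -> X = (- a / b)%:M.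
Proof.
move=> hb H; have := @solveY a 0 b X X hb; rewrite scale0r addr0 => /(_ H) ->.
by rewrite oppr0 mul0r scale0r addr0.
Qed.

Lemma span_core (X Y : 'M[F]_2) :
  (forall a b c, ~ SRS (a%:M + b *: X + c *: Y)) ->
  (forall a b c, nilpm (a%:M + b *: X + c *: Y) ->
     \tr ((a%:M + b *: X + c *: Y) *m X) = 0 /\ \tr ((a%:M + b *: X + c *: Y) *m Y) = 0) ->
  nsc X -> exists a b, Y = a%:M + b *: X.
Proof.
move=> hS hN hX; apply: NNPP => hY.
have nz (a b c : F) : (c != 0) || (b != 0) -> a%:M + b *: X + c *: Y != 0.
  case/orP => h; apply/eqP => H.
    by apply: hY; exists (- a / c), (- b / c); apply: solveY H.
  move: H; have [-> H|hc0 H] := eqVneq c 0.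
    by move: H; rewrite scale0r addr0 => /(solveX h) /(nsc_scal hX).
  by apply: hY; exists (- a / c), (- b / c); apply: solveY H.
have col1 : exists a b c, [/\ (a%:M + b *: X + c *: Y) 0 0 = 0,
    (a%:M + b *: X + c *: Y) 1 0 = 0, (a%:M + b *: X + c *: Y) 1 1 = 0 &
    (a%:M + b *: X + c *: Y) 0 1 != 0].
  have [Z [a [b [c [hZe hZ h00 h10]]]]] : exists Z a b c, [/\ Z = a%:M + b *: X + c *: Y, Z != 0,
      Z 0 0 = 0 & Z 1 0 = 0] .
    have [hx|hx] := boolP ((X 1 0 != 0) || (Y 1 0 != 0)).
      exists ((X 0 0 * Y 1 0 - Y 0 0 * X 1 0)%:M + (- Y 1 0) *: X + (X 1 0) *: Y).
      exists (X 0 0 * Y 1 0 - Y 0 0 * X 1 0), (- Y 1 0), (X 1 0); split => //.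
      - by apply: nz; move: hx; rewrite oppr_eq0 orbC.
      - rewrite !mxE !mulr1n; ring.
      - rewrite !mxE !mulr0n; ring.
    move: hx; rewrite negb_or !negbK => /andP [/eqP hx /eqP hy].
    exists ((- X 0 0)%:M + 1 *: X + 0 *: Y), (- X 0 0), 1, 0; split => //.
    - by apply: nz; rewrite oner_eq0 orbT.
    - rewrite !mxE !mulr1n; ring.
    - rewrite !mxE !mulr0n hx hy; ring.
  exists a, b, c; rewrite -hZe.
  have h11 : Z 1 1 = 0.
    apply: NNPP => h11; apply: (hS a b c); rewrite -hZe; exists 0, (Z 1 1).
    split; first by rewrite eq_sym; apply/eqP.
      by rewrite tr2E h00 !add0r.
    by rewrite det2E h00 h10 !mul0r mulr0 subr0.
  split => //; apply: contraNneq hZ => h01; apply/eqP; apply: mx2_eq.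
  - by rewrite h00 mxE.
  - by rewrite h01 mxE.
  - by rewrite h10 mxE.
  - by rewrite h11 mxE.
have col2 : exists a b c, [/\ (a%:M + b *: X + c *: Y) 0 1 = 0,
    (a%:M + b *: X + c *: Y) 1 1 = 0, (a%:M + b *: X + c *: Y) 0 0 = 0 &
    (a%:M + b *: X + c *: Y) 1 0 != 0].
  have [Z [a [b [c [hZe hZ h01 h11]]]]] : exists Z a b c, [/\ Z = a%:M + b *: X + c *: Y, Z != 0,
      Z 0 1 = 0 & Z 1 1 = 0] .
    have [hx|hx] := boolP ((X 0 1 != 0) || (Y 0 1 != 0)).
      exists ((X 1 1 * Y 0 1 - Y 1 1 * X 0 1)%:M + (- Y 0 1) *: X + (X 0 1) *: Y).
      exists (X 1 1 * Y 0 1 - Y 1 1 * X 0 1), (- Y 0 1), (X 0 1); split => //.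
      - by apply: nz; move: hx; rewrite oppr_eq0 orbC.
      - rewrite !mxE !mulr0n; ring.
      - rewrite !mxE !mulr1n; ring.
    move: hx; rewrite negb_or !negbK => /andP [/eqP hx /eqP hy].
    exists ((- X 1 1)%:M + 1 *: X + 0 *: Y), (- X 1 1), 1, 0; split => //.
    - by apply: nz; rewrite oner_eq0 orbT.
    - rewrite !mxE !mulr0n hx hy; ring.
    - rewrite !mxE !mulr1n; ring.
  exists a, b, c; rewrite -hZe.
  have h00 : Z 0 0 = 0.
    apply: NNPP => h00; apply: (hS a b c); rewrite -hZe; exists (Z 0 0), 0.
    split; first by apply/eqP.
      by rewrite tr2E h11 !addr0.
    by rewrite det2E h01 h11 !mul0r mulr0 subr0.
  split => //; apply: contraNneq hZ => h10; apply/eqP; apply: mx2_eq.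
  - by rewrite h00 mxE.
  - by rewrite h01 mxE.
  - by rewrite h10 mxE.
  - by rewrite h11 mxE.
have [a1 [b1 [c1 [z00 z10 z11 z01]]]] := col1.
have [a2 [b2 [c2 [w01 w11 w00 w10]]]] := col2.
have hnil : nilpm (a1%:M + b1 *: X + c1 *: Y).
  by split; rewrite ?tr2E ?det2E z00 ?z10 z11 ?addr0 ?mul0r ?mulr0 ?subr0.
have [t1 t2] := hN a1 b1 c1 hnil.
have : \tr ((a1%:M + b1 *: X + c1 *: Y) *m (a2%:M + b2 *: X + c2 *: Y)) = 0.
  have -> : \tr ((a1%:M + b1 *: X + c1 *: Y) *m (a2%:M + b2 *: X + c2 *: Y)) =
    a2 * \tr (a1%:M + b1 *: X + c1 *: Y) + b2 * \tr ((a1%:M + b1 *: X + c1 *: Y) *m X)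
    + c2 * \tr ((a1%:M + b1 *: X + c1 *: Y) *m Y).
    rewrite !mxE2 !mxE !mulr1n !mulr0n; ring.
  rewrite t1 t2 tr2E z00 z11; ring.
rewrite tr2E !mul2E z00 z10 z11 w00 w11 => /eqP.
have -> : 0 * 0 + (a1%:M + b1 *: X + c1 *: Y) 0 1 * (a2%:M + b2 *: X + c2 *: Y) 1 0 +
  (0 * (a2%:M + b2 *: X + c2 *: Y) 0 1 + 0 * 0) =
  (a1%:M + b1 *: X + c1 *: Y) 0 1 * (a2%:M + b2 *: X + c2 *: Y) 1 0 by ring.
by rewrite mulf_eq0 (negbTE z01) (negbTE w10).
Qed.
End Span.


Ltac msimp := rewrite ?mxE2 ?mxE ?mxE2 ?eqxx ?eq01 ?eq10 ?mulr1n ?mulr0n.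

Section C3.
Variable F : fieldType.
Variable d : nat.
Hypothesis hF : infinite_field F.
Notation pt := (pt F d).

Definition HP1 (u : pt) := exists s c, SRS (Ls s c u).
Definition HP2 (u : pt) := exists s c l, nilpm (Ls s c u) /\ \tr (Ls s c u *m u l) != 0.

Definition c3 (a b c : F) (k : 'I_d) : option 'I_d -> F :=
  fun o => if o is Some j then (if j == k then b else c) else a.

Lemma Ls3 a b c k m (u : pt) : k != m ->
  Ls [:: None; Some k; Some m] (c3 a b c k) u = a%:M + b *: u k + c *: u m.
Proof.
move=> km; rewrite /Ls !big_cons big_nil /= eqxx eq_sym (negbTE km) addr0 scalemx1.
by rewrite addrA.
Qed.

Lemma span (u : pt) : ~ HP1 u -> ~ HP2 u -> forall k m, nsc (u k) ->
  exists a b, u m = a%:M + b *: u k.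
Proof.
move=> h1 h2 k m hk; have [->|km] := eqVneq k m.
  by exists 0, 1; rewrite scale1r -scalemx1 scale0r add0r.
apply: span_core => // [a b c hS|a b c hN].
  by apply: h1; exists [:: None; Some k; Some m], (c3 a b c k); rewrite Ls3.
have hl l : \tr ((a%:M + b *: u k + c *: u m) *m u l) = 0.
  have [//|hl] := eqVneq (\tr ((a%:M + b *: u k + c *: u m) *m u l)) 0; exfalso; apply: h2.
  by exists [:: None; Some k; Some m], (c3 a b c k), l; rewrite Ls3.
by rewrite !hl.
Qed.

Lemma HP1_tr (u v : pt) : Wsame u v -> HP1 v -> HP1 u.
Proof.
move=> hW [s [c [l [m [hlm ht hd]]]]]; exists s, c, l, m; split => //.
  by rewrite (Ls_tr1 s c hW).
by rewrite (Ls_det s c hW).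
Qed.
Lemma HP2_tr (u v : pt) : Wsame u v -> HP2 v -> HP2 u.
Proof.
move=> hW [s [c [l [[ht hd] hl]]]]; exists s, c, l; split; first split.
- by rewrite (Ls_tr1 s c hW).
- by rewrite (Ls_det s c hW).
- by have := Ls_tr2 s [:: Some l] c onec hW; rewrite !Lsk => ->.
Qed.

Lemma cj_comb (g : 'M[F]_2) a b X : g \in unitmx ->
  cj g (a%:M + b *: X) = a%:M + b *: cj g X.
Proof.
move=> hg; rewrite /cj mulmxDr mulmxDl -scalemxAr -scalemxAl mul_mx_scalar.
by rewrite -scalemxAl mulVmx // scalemx1.
Qed.


Lemma comp_conj (X : 'M[F]_2) : X 1 0 != 0 ->
  exists g, g \in unitmx /\ X *m g = g *m mk2 0 (- \det X) 1 (\tr X).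
Proof.
move=> h; exists (mk2 1 (X 0 0) 0 (X 1 0)); split.
  by apply: unit2; rewrite !mxE2 ?mul1r ?mul0r ?mulr0 ?subr0.
by apply: mx2_eq; rewrite !mxE2; ring.
Qed.

Lemma field_case (t e a b a' b' : F) : (forall r, r ^+ 2 - t * r + e != 0) ->
  \tr (a%:M + b *: mk2 0 (- e) 1 t) = \tr (a'%:M + b' *: mk2 0 (- e) 1 t) ->
  \tr (mk2 0 (- e) 1 t *m (a%:M + b *: mk2 0 (- e) 1 t)) =
    \tr (mk2 0 (- e) 1 t *m (a'%:M + b' *: mk2 0 (- e) 1 t)) ->
  \det (a%:M + b *: mk2 0 (- e) 1 t) = \det (a'%:M + b' *: mk2 0 (- e) 1 t) ->
  a = a' /\ b = b'.
Proof.
move=> hr h1 h2 h3.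
have hq : (a - a') ^+ 2 + (a - a') * (b - b') * t + (b - b') ^+ 2 * e = 0.
  have -> : (a - a') ^+ 2 + (a - a') * (b - b') * t + (b - b') ^+ 2 * e =
    (\det (a%:M + b *: mk2 0 (- e) 1 t) - \det (a'%:M + b' *: mk2 0 (- e) 1 t))
    - (a' + b' * t) * (\tr (a%:M + b *: mk2 0 (- e) 1 t) - \tr (a'%:M + b' *: mk2 0 (- e) 1 t))
    + b' * (\tr (mk2 0 (- e) 1 t *m (a%:M + b *: mk2 0 (- e) 1 t)) -
            \tr (mk2 0 (- e) 1 t *m (a'%:M + b' *: mk2 0 (- e) 1 t))).
    rewrite !mxE2 !mxE !mxE2 ?mulr1n ?mulr0n; ring.
  by rewrite h1 h2 h3 !subrr !mulr0 subrr addr0.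
have hb : b = b'.
  apply: NNPP => hb; have hb0 : b - b' != 0 by rewrite subr_eq0; apply/eqP.
  move: (hr (- (a - a') / (b - b'))); rewrite -[X in X != 0](mulfK (mulf_neq0 hb0 hb0)).
  have -> : ((- (a - a') / (b - b')) ^+ 2 - t * (- (a - a') / (b - b')) + e) * ((b - b') * (b - b')) =
     (a - a') ^+ 2 + (a - a') * (b - b') * t + (b - b') ^+ 2 * e by fld.
  by rewrite hq mul0r eqxx.
split => //; move: hq; rewrite hb subrr mulr0 mul0r expr0n /= mul0r !addr0 => /eqP.
by rewrite sqrf_eq0 subr_eq0 => /eqP.
Qed.

Lemma not_nsc (X : 'M[F]_2) : ~ nsc X -> X = (X 0 0)%:M.
Proof.
rewrite /nsc => h; apply: mx2_eq; rewrite !mxE2 ?mulr0 ?mulr1 //.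
- by apply/eqP; apply: negbNE; apply/negP => h'; apply: h; left.
- by apply/eqP; apply: negbNE; apply/negP => h'; apply: h; right; left.
- by apply/eqP; rewrite eq_sym; apply: negbNE; apply/negP => h'; apply: h; right; right.
Qed.

Lemma nil_type (u : pt) : ~ HP1 u -> ~ HP2 u ->
  (forall k, exists r, r ^+ 2 - \tr (u k) * r + \det (u k) = 0) ->
  exists rho : 'I_d -> F, eqv u (fun k => (rho k)%:M) /\
    forall k, \tr (u k) = rho k + rho k /\ \det (u k) = rho k * rho k.
Proof.
move=> h1 h2 hr.
have hrep k : exists r, \tr (u k) = r + r /\ \det (u k) = r * r.
  have [r hr'] := hr k; exists r.
  have e1 : \det (u k) = \tr (u k) * r - r ^+ 2.
    by apply/eqP; rewrite -subr_eq0 -hr'; apply/eqP; ring.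
  case: (eqVneq r (\tr (u k) - r)) => [hrr|hrr].
    have et : \tr (u k) = r + r by rewrite {2}hrr; ring.
    by split => //; rewrite e1 et; ring.
  exfalso; apply: h1; exists [:: Some k], onec, r, (\tr (u k) - r); rewrite Lsk; split => //.
    ring.
  by rewrite e1; ring.
case: (classic (exists k, nsc (u k))) => [[k hk]|hk]; last first.
  exists (fun k => u k 0 0); split; last first.
    move=> j; have -> : u j = (u j 0 0)%:M.
      by apply: not_nsc => h; apply: hk; exists j.
    by rewrite !mxE2; split; ring.
  have hu : u = (fun k => (u k 0 0)%:M) :> pt.
    apply: functional_extensionality => j; apply: not_nsc => h; apply: hk; exists j; done.
  rewrite {1}hu; exact: eqv_refl.
have [r [htr hdt]] := hrep k.
pose N := u k - r%:M.
have hN : nilpm N.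
  split.
    have -> : \tr N = \tr (u k) - (r + r) by rewrite /N; msimp; ring.
    by rewrite htr subrr.
  have -> : \det N = \det (u k) - r * \tr (u k) + r * r by rewrite /N; msimp; ring.
  by rewrite hdt htr; ring.
have hN0 : N != 0.
  apply/eqP => h; apply: (nsc_scal (a := r) hk); apply/eqP; by rewrite -subr_eq0 -/N h.
have [g [hg eg]] := nil_conj hN hN0.
have egk : u k *m g = g *m (r%:M + mk2 0 1 0 0).
  have -> : u k = N + r%:M by rewrite /N subrK.
  by rewrite mulmxDl eg mulmxDr scalar_mxC addrC.
have hsp m := span h1 h2 m hk.
have form m : exists a b, conj_pt g u m = a%:M + b *: (r%:M + mk2 0 1 0 0).
  have [a [b hm]] := hsp m; exists a, b.
  by rewrite /conj_pt -/(cj g (u m)) hm cj_comb // (cj_of hg egk).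
have up m : conj_pt g u m 1 0 = 0.
  by have [a [b ->]] := form m; rewrite !mxE !mxE2 ?mulr0n; ring.
have dg m : conj_pt g u m 1 1 = conj_pt g u m 0 0.
  by have [a [b ->]] := form m; rewrite !mxE !mxE2 ?mulr0n ?mulr1n; ring.
exists (fun m => conj_pt g u m 0 0); split.
  apply: eqv_trans (eqv_conjpt u hg) _; apply: eqv_trans (upper_equiv hF up) _.
  have -> : dp (conj_pt g u) = (fun m => (conj_pt g u m 0 0)%:M).
    by apply: functional_extensionality => m; apply: mx2_eq; rewrite /dp ?mk2E00 ?mk2E01 ?mk2E10 ?mk2E11 ?sc00 ?sc01 ?sc10 ?sc11 ?dg.
  done.
move=> m; rewrite -(cj_tr (u m) hg) -(cj_det (u m) hg) -/(cj g (u m)).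
rewrite -[cj g (u m)]/(conj_pt g u m) !tr2E !det2E up dg; split; ring.
Qed.

Lemma c10 (X : 'M[F]_2) : (forall r, r ^+ 2 - \tr X * r + \det X != 0) -> X 1 0 != 0.
Proof.
move=> h; apply/negP => /eqP h10; move: (h (X 0 0)); rewrite tr2E det2E h10.
have -> : X 0 0 ^+ 2 - (X 0 0 + X 1 1) * X 0 0 + (X 0 0 * X 1 1 - X 0 1 * 0) = 0 by ring.
by rewrite eqxx.
Qed.

Lemma caseP3 (u v : pt) : Wsame u v -> ~ HP1 u -> ~ HP2 u -> eqv u v.
Proof.
move=> hW h1 h2.
have h1' : ~ HP1 v by move=> h; apply: h1; exact: HP1_tr hW h.
have h2' : ~ HP2 v by move=> h; apply: h2; exact: HP2_tr hW h.
have etr k : \tr (u k) = \tr (v k) by have := Ls_tr1 [:: Some k] onec hW; rewrite !Lsk.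
have edt k : \det (u k) = \det (v k) by have := Ls_det [:: Some k] onec hW; rewrite !Lsk.
case: (classic (exists k, forall r, r ^+ 2 - \tr (u k) * r + \det (u k) != 0)) => [[k hk]|hk].
  have hk' : forall r, r ^+ 2 - \tr (v k) * r + \det (v k) != 0 by rewrite -etr -edt.
  have [gu [hgu egu]] := comp_conj (c10 hk).
  have [gv [hgv egv]] := comp_conj (c10 hk').
  rewrite -etr -edt in egv.
  have nk : nsc (u k) by right; left; exact: c10 hk.
  have nk' : nsc (v k) by right; left; exact: c10 hk'.
  apply: eqv_trans (eqv_conjpt u hgu) _; apply: eqv_sym; apply: eqv_trans (eqv_conjpt v hgv) _.
  apply: eqv_sym.
  have -> : conj_pt gu u = conj_pt gv v.
    apply: functional_extensionality => m.
    have [a [b hm]] := span h1 h2 m nk; have [a' [b' hm']] := span h1' h2' m nk'.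
    have ck : conj_pt gu u k = mk2 0 (- \det (u k)) 1 (\tr (u k)) by exact: cj_of hgu egu.
    have ck' : conj_pt gv v k = mk2 0 (- \det (u k)) 1 (\tr (u k)) by exact: cj_of hgv egv.
    have fu : conj_pt gu u m = a%:M + b *: mk2 0 (- \det (u k)) 1 (\tr (u k)).
      by rewrite -ck /conj_pt -/(cj gu (u m)) -/(cj gu (u k)) hm cj_comb.
    have fv : conj_pt gv v m = a'%:M + b' *: mk2 0 (- \det (u k)) 1 (\tr (u k)).
      by rewrite -ck' /conj_pt -/(cj gv (v m)) -/(cj gv (v k)) hm' cj_comb.
    have hW' := Wsame_conj hgu hgv hW.
    have t1 := Ls_tr1 [:: Some m] onec hW'; rewrite !Lsk fu fv in t1.
    have t3 := Ls_det [:: Some m] onec hW'; rewrite !Lsk fu fv in t3.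
    have t2 := Ls_tr2 [:: Some k] [:: Some m] onec onec hW'; rewrite !Lsk fu fv ck ck' in t2.
    by rewrite fu fv; have [-> ->] := field_case hk t1 t2 t3.
  exact: eqv_refl.
have hr k : exists r, r ^+ 2 - \tr (u k) * r + \det (u k) = 0.
  apply: NNPP => h; apply: hk; exists k => r; apply/eqP => e; apply: h; by exists r.
have hr' k : exists r, r ^+ 2 - \tr (v k) * r + \det (v k) = 0 by rewrite -etr -edt.
have [rho [eu hu]] := nil_type h1 h2 hr.
have [rho' [ev hv]] := nil_type h1' h2' hr'.
have erho : rho = rho'.
  apply: functional_extensionality => k.
  have [a1 a2] := hu k; have [b1 b2] := hv k.
  rewrite -etr a1 in b1; rewrite -edt a2 in b2.
  apply/eqP; rewrite -subr_eq0 -sqrf_eq0; apply/eqP.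
  have -> : (rho k - rho' k) ^+ 2 = (rho k * rho k - rho' k * rho' k)
     - rho' k * ((rho k + rho k) - (rho' k + rho' k)) by ring.
  by rewrite b1 b2 !subrr mulr0 subr0.
rewrite erho in eu; exact: eqv_trans eu (eqv_sym ev).
Qed.

Lemma core (u v : pt) : Wsame u v -> eqv u v.
Proof.
move=> hW.
case: (classic (HP1 u)) => [[s [c h]]|h1]; first exact: (caseP1 hF hW h).
case: (classic (HP2 u)) => [[s [c [l [h hl]]]]|h2]; first exact: (caseP2 hW h hl).
exact: caseP3 hW h1 h2.
Qed.

End C3.


Section Fin.
Variable F : fieldType.
Variable d : nat.
Notation pt := (pt F d).

Definition MP (M : pt -> 'M[F]_2) := forall i j, polyfun (fun A => M A i j).
Lemma MP_coord k : MP (fun A => A k). Proof. by move=> i j; apply: pf_coord. Qed.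
Lemma MP_mul M N : MP M -> MP N -> MP (fun A => M A *m N A).
Proof.
move=> hM hN i j; apply: (pf_ext (f := fun A => M A i 0 * N A 0 j + M A i 1 * N A 1 j)).
  by apply: pf_add; apply: pf_mul.
by move=> A; rewrite mul2E.
Qed.
Lemma MP_tr M : MP M -> polyfun (fun A => \tr (M A)).
Proof.
move=> hM; apply: (pf_ext (f := fun A => M A 0 0 + M A 1 1)); first by apply: pf_add.
by move=> A; rewrite tr2E.
Qed.
Lemma MP_det M : MP M -> polyfun (fun A => \det (M A)).
Proof.
move=> hM; apply: (pf_ext (f := fun A => M A 0 0 * M A 1 1 - M A 0 1 * M A 1 0)).
  by apply: pf_sub; apply: pf_mul.
by move=> A; rewrite det2E.
Qed.

Lemma Sd_inv (f : pt -> F) : Sd f -> invariant f.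
Proof.
case=> [[i ->]|[[i ->]|[[i [j [_ ->]]]|[i [j [k [_ [_ ->]]]]]]]]; split.
- by apply: MP_tr; apply: MP_coord.
- by move=> g hg A; rewrite /conj_pt -/(cj g (A i)) cj_tr.
- by apply: MP_det; apply: MP_coord.
- by move=> g hg A; rewrite /conj_pt -/(cj g (A i)) cj_det.
- by apply: MP_tr; apply: MP_mul; apply: MP_coord.
- by move=> g hg A; rewrite /conj_pt -/(cj g (A i)) -/(cj g (A j)) cjM // cj_tr.
- by apply: MP_tr; apply: MP_mul; [apply: MP_mul|]; apply: MP_coord.
- move=> g hg A; rewrite /conj_pt -/(cj g (A i)) -/(cj g (A j)) -/(cj g (A k)).
  by rewrite !cjM // cj_tr.
Qed.

Lemma sep : infinite_field F -> separating (@Sd F d).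
Proof.
move=> hF; split; first exact: Sd_inv.
move=> u v [f [hf hne]]; apply: NNPP => hn; apply: hne.
have hS : Seq u v.
  move=> g hg; apply: NNPP => h; apply: hn; by exists g.
exact: (core hF (Wsame_of_Seq hS) hf).
Qed.

Definition del (m i : 'I_d) : F := if m == i then 1 else 0.

Ltac kill := rewrite /del; repeat match goal with
  | |- context [?x == ?x] => rewrite eqxx
  | H : is_true (?x != ?y) |- context [?x == ?y] => rewrite (negbTE H)
  | H : is_true (?x != ?y) |- context [?y == ?x] => rewrite (eq_sym y x) (negbTE H)
 end; rewrite /=.


Lemma idx4 (a i j k : 'I_d) : [\/ a = i, a = j, a = k | [&& a != i, a != j & a != k]].
Proof.
have [->|ai] := eqVneq a i; first by constructor 1.
have [->|aj] := eqVneq a j; first by constructor 2.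
have [->|ak] := eqVneq a k; first by constructor 3.
by constructor 4; apply/and3P.
Qed.

Ltac leaf := let hne := fresh "hne" in move=> hne; subst;
  first [ by [] | (exfalso; lia) | (exfalso; apply: hne; rewrite ?mxE2; kill; ring) ].

Ltac ic a i j k := case: (idx4 a i j k) => [?|?|?|/and3P [? ? ?]].

Ltac neq1 := let E := fresh "E" in let H := fresh "H" in
  match goal with |- ?x <> ?y => have E : x - y = 1 by ring end;
  move=> H; move: E; rewrite H subrr => /esym/eqP; by rewrite oner_eq0.

Lemma wit3 (i j k : 'I_d) : (i < j)%N -> (j < k)%N ->
  exists u v : pt, (fun A : pt => \tr (A i *m A j *m A k)) u <> (fun A : pt => \tr (A i *m A j *m A k)) v /\
  forall g, Sd g -> g u <> g v -> g = (fun A : pt => \tr (A i *m A j *m A k)).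
Proof.
move=> ij jk.
have nij : i != j by rewrite neq_ltn ij.
have njk : j != k by rewrite neq_ltn jk.
have nik : i != k by rewrite neq_ltn (ltn_trans ij jk).
exists (fun m => mk2 (del m k) (del m i) (del m j) 0), (fun m => mk2 0 (del m i) (del m j) (del m k)).
split.
  rewrite /= !mxE2; kill; neq1.
move=> g; case=> [[a ->]|[[a ->]|[[a [b [ab ->]]]|[a [b [c [ab [bc ->]]]]]]]] /=.
- ic a i j k; leaf.
- ic a i j k; leaf.
- ic a i j k; ic b i j k; leaf.
- ic a i j k; ic b i j k; ic c i j k; leaf.
Qed.

Lemma wit1 (i : 'I_d) :
  exists u v : pt, (fun A : pt => \tr (A i)) u <> (fun A : pt => \tr (A i)) v /\
  forall g, Sd g -> g u <> g v -> g = (fun A : pt => \tr (A i)).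
Proof.
exists (fun m => mk2 (del m i) 0 0 0), (fun m => mk2 0 0 0 0).
split.
  rewrite /= !mxE2; kill; neq1.
move=> g; case=> [[a ->]|[[a ->]|[[a [b [ab ->]]]|[a [b [c [ab [bc ->]]]]]]]] /=.
- ic a i i i; leaf.
- ic a i i i; leaf.
- ic a i i i; ic b i i i; leaf.
- ic a i i i; ic b i i i; ic c i i i; leaf.
Qed.

Lemma witd (i : 'I_d) :
  exists u v : pt, (fun A : pt => \det (A i)) u <> (fun A : pt => \det (A i)) v /\
  forall g, Sd g -> g u <> g v -> g = (fun A : pt => \det (A i)).
Proof.
exists (fun m => mk2 0 (del m i) (- del m i) 0), (fun m => mk2 0 0 0 0).
split.
  rewrite /= !mxE2; kill; neq1.
move=> g; case=> [[a ->]|[[a ->]|[[a [b [ab ->]]]|[a [b [c [ab [bc ->]]]]]]]] /=.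
- ic a i i i; leaf.
- ic a i i i; leaf.
- ic a i i i; ic b i i i; leaf.
- ic a i i i; ic b i i i; ic c i i i; leaf.
Qed.

Lemma wit2 (i j : 'I_d) : (i < j)%N ->
  exists u v : pt, (fun A : pt => \tr (A i *m A j)) u <> (fun A : pt => \tr (A i *m A j)) v /\
  forall g, Sd g -> g u <> g v -> g = (fun A : pt => \tr (A i *m A j)).
Proof.
move=> ij; have nij : i != j by rewrite neq_ltn ij.
exists (fun m => mk2 0 (del m i) (del m j) 0), (fun m => mk2 0 (del m i) 0 0).
split.
  rewrite /= !mxE2; kill; neq1.
move=> g; case=> [[a ->]|[[a ->]|[[a [b [ab ->]]]|[a [b [c [ab [bc ->]]]]]]]] /=.
- ic a i j j; leaf.
- ic a i j j; leaf.
- ic a i j j; ic b i j j; leaf.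
- ic a i j j; ic b i j j; ic c i j j; leaf.
Qed.

Lemma wit (f : pt -> F) : Sd f ->
  exists u v : pt, f u <> f v /\ forall g, Sd g -> g u <> g v -> g = f.
Proof.
case=> [[i ->]|[[i ->]|[[i [j [ij ->]]]|[i [j [k [ij [jk ->]]]]]]]].
- exact: wit1.
- exact: witd.
- exact: wit2.
- exact: wit3.
Qed.

End Fin.

Unset Implicit Arguments.

Theorem lemma2 (F : fieldType) (d : nat) (hF : infinite_field F)
  (hd1 : (1 <= d)%N) (hd3 : (d <= 3)%N) :
  minimal_separating (@Sd F d).
Proof.
split; first exact: sep hF.
move=> T hT [hTinv hTsep] f hf.
apply: NNPP => hTf.
have [u [v [hne hg]]] := wit hf.
have hs : separated u v by exists f; split; [exact: Sd_inv hf | exact: hne].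
have [g [hTg hgne]] := hTsep u v hs.
have e := hg g (hT g hTg) hgne.
by apply: hTf; rewrite -e.
Qed.
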